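(* Let $t\geq1$, $1\leq K_1\leq K_2$ be integers and $0<\mu<1/(2K_1)$. There is $n_0$ such that for all $n\geq n_0$ the following holds. Suppose $G=(U\cup V,E)$ is a bipartite graph with $|V|=K_1$ and $|U|=K_2$, and $\mathbf{H}$ is a simple $n$-blowup of the $3$-graph $H=\widehat{G}_{UV}$. If $\mathcal{P}$ is a $\mu$-regular partition of $\mathbf{H}$ with at most $t$ parts, then $\mathcal{P}$ is $4\mu$-homogeneous with respect to $\mathbf{H}$.
   Context: For a bipartite graph $G=(U\cup V,E)$, $\widehat G_{UV}$ is the $3$-graph with vertex set $\{a_u:u\in U\}\cup\{b_v:v\in V\}\cup\{c_v:v\in V\}$ and edges $a_ub_vc_v$ for $uv\in E$. For a $3$-graph $G'=(W,F)$, a simple $n$-blowup is the $3$-graph on $\bigcup_{w\in W}V_w$ (disjoint, $|V_w|=n$) with edge set $\bigcup_{w_1w_2w_3\in F}\{\{x_1,x_2,x_3\}:x_i\in V_{w_i}\}$. For a $3$-graph $\mathbf H$ and nonempty $X,Y,Z\subseteq V(\mathbf H)$, $d_{\mathbf H}(X,Y,Z)=|\{(x,y,z)\in X\times Y\times Z:\{x,y,z\}\in E(\mathbf H)\}|/(|X||Y||Z|)$. $(X,Y,Z)$ is $\mu$-regular if $|d(X,Y,Z)-d(X',Y',Z')|\le\mu$ for all $X'\subseteq X,Y'\subseteq Y,Z'\subseteq Z$ of sizes at least $\mu|X|,\mu|Y|,\mu|Z|$; it is $\eta$-homogeneous if $d(X,Y,Z)\in[0,\eta)\cup(1-\eta,1]$.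 A partition $\mathcal P$ of $V(\mathbf H)$ is $\mu$-regular (resp. $\eta$-homogeneous) if at least $(1-\mu)|V(\mathbf H)|^3$ (resp. $(1-\eta)|V(\mathbf H)|^3$) triples of $V(\mathbf H)^3$ lie in $X\times Y\times Z$ for some $\mu$-regular (resp. $\eta$-homogeneous) $(X,Y,Z)\in\mathcal P^3$. *)

(* Defs.v *)
From mathcomp Require Import all_boot all_order all_algebra.
From mathcomp Require Import reals.
Set Implicit Arguments. Unset Strict Implicit. Unset Printing Implicit Defensive.
Import Order.TTheory GRing.Theory Num.Theory.
Local Open Scope ring_scope.

(* A 3-graph on a finite vertex type T is given by its edge set
   F : {set {set T}} (edges are 3-element sets). *)

(* Vertex type of \hat G_{UV}: a_u = inl u, b_v = inr (inl v), c_v = inr (inr v). *)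
Definition hatV (U V : finType) : finType := (U + (V + V))%type.

Definition hatG_edges (U V : finType) (E : {set U * V}) : {set {set hatV U V}} :=
  [set [set (inl e.1 : hatV U V); inr (inl e.2); inr (inr e.2)] | e in E].

(* Simple n-blowup of (W, F): vertex set W x 'I_n, with V_w = {w} x 'I_n;
   edges {x1,x2,x3} with x_i in V_{w_i} for an edge w1w2w3 of F. *)
Definition blowup_edges (W : finType) (F : {set {set W}}) (n : nat)
  : {set {set (W * 'I_n)%type}} :=
  [set S : {set (W * 'I_n)%type} |
     [exists w : (W * W * W)%type, exists i : ('I_n * 'I_n * 'I_n)%type,
       ([set w.1.1; w.1.2; w.2] \in F) &&
       (S == [set (w.1.1, i.1.1); (w.1.2, i.1.2); (w.2, i.2)])]].

Section Density.
Variables (R : realType) (T : finType) (H : {set {set T}}).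

Definition dens (X Y Z : {set T}) : R :=
  (#|[set t : (T * T * T)%type | [&& t.1.1 \in X, t.1.2 \in Y, t.2 \in Z &
        [set t.1.1; t.1.2; t.2] \in H]]|)%:R
  / ((#|X| * #|Y| * #|Z|)%N)%:R.

Definition regular_triple (mu : R) (X Y Z : {set T}) : bool :=
  [forall X' : {set T}, forall Y' : {set T}, forall Z' : {set T},
    [&& X' \subset X, Y' \subset Y, Z' \subset Z,
        mu * (#|X|)%:R <= (#|X'|)%:R, mu * (#|Y|)%:R <= (#|Y'|)%:R &
        mu * (#|Z|)%:R <= (#|Z'|)%:R]
    ==> (`|dens X Y Z - dens X' Y' Z'| <= mu)].

Definition homogeneous_triple (eta : R) (X Y Z : {set T}) : bool :=
  (0 <= dens X Y Z < eta) || (1 - eta < dens X Y Z <= 1).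

Definition regular_partition (mu : R) (P : {set {set T}}) : Prop :=
  (1 - mu) * ((#|T| ^ 3)%N)%:R <=
  (#|[set t : (T * T * T)%type | [exists X in P, exists Y in P, exists Z in P,
        [&& t.1.1 \in X, t.1.2 \in Y, t.2 \in Z & regular_triple mu X Y Z]]]|)%:R.

Definition homogeneous_partition (eta : R) (P : {set {set T}}) : Prop :=
  (1 - eta) * ((#|T| ^ 3)%N)%:R <=
  (#|[set t : (T * T * T)%type | [exists X in P, exists Y in P, exists Z in P,
        [&& t.1.1 \in X, t.1.2 \in Y, t.2 \in Z & homogeneous_triple eta X Y Z]]]|)%:R.
End Density.

(* Main.v *)
Require Import Defs.
From mathcomp Require Import all_boot all_order all_algebra.
From mathcomp Require Import reals.
From mathcomp Require Import ring lra zify.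
Set Implicit Arguments. Unset Strict Implicit. Unset Printing Implicit Defensive.
Import Order.TTheory GRing.Theory Num.Theory.
Local Open Scope ring_scope.

Section Gen.
Variables (R : realType) (T : finType) (H : {set {set T}}).
Implicit Types X Y Z : {set T}.

Definition trip (X Y Z : {set T}) :=
  [set t : (T * T * T)%type | [&& t.1.1 \in X, t.1.2 \in Y, t.2 \in Z &
        [set t.1.1; t.1.2; t.2] \in H]].

Lemma densE X Y Z : dens R H X Y Z = (#|trip X Y Z|)%:R / ((#|X| * #|Y| * #|Z|)%N)%:R.
Proof. by []. Qed.

Lemma trip_le X Y Z : (#|trip X Y Z| <= #|X| * #|Y| * #|Z|)%N.
Proof.
rewrite -!cardsX; apply: subset_leq_card; apply/subsetP => t.
by rewrite !inE => /and4P [-> -> -> _].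
Qed.

Lemma dens_ge0 X Y Z : 0 <= dens R H X Y Z.
Proof. by rewrite densE divr_ge0 // ler0n. Qed.

Lemma dens_le1 X Y Z : dens R H X Y Z <= 1.
Proof.
rewrite densE; have [->|pos] := eqVneq (#|X| * #|Y| * #|Z|)%N 0%N.
  by rewrite invr0 mulr0 ler01.
rewrite ler_pdivrMr ?ltr0n ?lt0n // mul1r ler_nat; exact: trip_le.
Qed.

Lemma dens0 X Y Z :
  (forall x y z, x \in X -> y \in Y -> z \in Z -> [set x; y; z] \notin H) ->
  dens R H X Y Z = 0.
Proof.
move=> h; rewrite densE.
suff -> : trip X Y Z = set0 by rewrite cards0 mul0r.
apply/setP => t; rewrite !inE; apply/negP => /and4P [a b c d].
by move: (h _ _ _ a b c); rewrite d.
Qed.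

Lemma dens1 X Y Z :
  (0 < #|X|)%N -> (0 < #|Y|)%N -> (0 < #|Z|)%N ->
  (forall x y z, x \in X -> y \in Y -> z \in Z -> [set x; y; z] \in H) ->
  dens R H X Y Z = 1.
Proof.
move=> hx hy hz h; rewrite densE.
suff -> : trip X Y Z = setX (setX X Y) Z.
  by rewrite !cardsX divff // pnatr_eq0 -lt0n !muln_gt0 hx hy hz.
apply/setP => t; rewrite !inE; apply/idP/idP; first by case/and4P => -> -> ->.
by case/andP => /andP [a b] c; rewrite a b c h.
Qed.

Lemma dens_sw12 X Y Z : dens R H X Y Z = dens R H Y X Z.
Proof.
rewrite !densE; congr (_ / _); last by rewrite (mulnC #|X|).
pose f (t : (T * T * T)%type) := ((t.1.2, t.1.1), t.2).
have fi : injective f by move=> [[a b] c] [[a' b'] c'] [] -> -> ->.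
suff -> : trip Y X Z = f @^-1: trip X Y Z by rewrite card_preimset.
apply/setP => t; rewrite !inE /= (setUC [set t.1.1]).
by case: (t.1.1 \in Y); case: (t.1.2 \in X).
Qed.

Lemma dens_sw23 X Y Z : dens R H X Y Z = dens R H X Z Y.
Proof.
rewrite !densE; congr (_ / _); last by rewrite mulnAC.
pose f (t : (T * T * T)%type) := ((t.1.1, t.2), t.1.2).
have fi : injective f by move=> [[a b] c] [[a' b'] c'] [] -> -> ->.
suff -> : trip X Z Y = f @^-1: trip X Y Z by rewrite card_preimset.
apply/setP => t; rewrite !inE /= setUAC.
by case: (t.1.2 \in Z); case: (t.2 \in Y).
Qed.

Lemma reg_sw12 (mu : R) X Y Z : regular_triple H mu X Y Z -> regular_triple H mu Y X Z.
Proof.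
move/forallP => h; apply/forallP => X'; apply/forallP => Y'; apply/forallP => Z'.
apply/implyP => /and4P [a b c /and3P [d e f]].
move: (h Y'); move/forallP/(_ X')/forallP/(_ Z')/implyP.
by rewrite a b c d e f (dens_sw12 X) (dens_sw12 Y'); apply.
Qed.

Lemma reg_sw23 (mu : R) X Y Z : regular_triple H mu X Y Z -> regular_triple H mu X Z Y.
Proof.
move/forallP => h; apply/forallP => X'; apply/forallP => Y'; apply/forallP => Z'.
apply/implyP => /and4P [a b c /and3P [d e f]].
move: (h X'); move/forallP/(_ Z')/forallP/(_ Y')/implyP.
by rewrite a b c d e f (dens_sw23 X) (dens_sw23 X'); apply.
Qed.

Lemma reg_use (mu : R) X Y Z (X' Y' Z' : {set T}) : regular_triple H mu X Y Z ->
  X' \subset X -> Y' \subset Y -> Z' \subset Z ->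
  mu * (#|X|)%:R <= (#|X'|)%:R -> mu * (#|Y|)%:R <= (#|Y'|)%:R ->
  mu * (#|Z|)%:R <= (#|Z'|)%:R ->
  `|dens R H X Y Z - dens R H X' Y' Z'| <= mu.
Proof.
move/forallP => h a b c d e f.
move: (h X'); move/forallP/(_ Y')/forallP/(_ Z')/implyP.
by rewrite a b c d e f; apply.
Qed.

Lemma zero_lem (mu : R) X Y Z (X' Y' Z' : {set T}) : regular_triple H mu X Y Z ->
  X' \subset X -> Y' \subset Y -> Z' \subset Z ->
  mu * (#|X|)%:R <= (#|X'|)%:R -> mu * (#|Y|)%:R <= (#|Y'|)%:R ->
  mu * (#|Z|)%:R <= (#|Z'|)%:R ->
  (forall x y z, x \in X' -> y \in Y' -> z \in Z' -> [set x; y; z] \notin H) ->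
  dens R H X Y Z <= mu.
Proof.
move=> r a b c d e f h; have := reg_use r a b c d e f.
rewrite (@dens0 X' Y' Z') // subr0; apply: le_trans; exact: ler_norm.
Qed.

Lemma one_lem (mu : R) X Y Z (X' Y' Z' : {set T}) : regular_triple H mu X Y Z ->
  X' \subset X -> Y' \subset Y -> Z' \subset Z ->
  mu * (#|X|)%:R <= (#|X'|)%:R -> mu * (#|Y|)%:R <= (#|Y'|)%:R ->
  mu * (#|Z|)%:R <= (#|Z'|)%:R ->
  (0 < #|X'|)%N -> (0 < #|Y'|)%N -> (0 < #|Z'|)%N ->
  (forall x y z, x \in X' -> y \in Y' -> z \in Z' -> [set x; y; z] \in H) ->
  1 - mu <= dens R H X Y Z.
Proof.
move=> r a b c d e f p q s h; have := reg_use r a b c d e f.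
rewrite (@dens1 X' Y' Z') // => /ler_normlP [h1 h2]; lra.
Qed.

Lemma dens_pos_nonempty X Y Z : 0 < dens R H X Y Z ->
  [/\ (0 < #|X|)%N, (0 < #|Y|)%N & (0 < #|Z|)%N].
Proof.
rewrite densE; have [h|h] := eqVneq (#|X| * #|Y| * #|Z|)%N 0%N.
  by rewrite h invr0 mulr0 ltxx.
by move: h; rewrite -lt0n !muln_gt0 => /andP [/andP [-> ->] ->].
Qed.


Lemma smallX (mu : R) X Y Z (X' Y' Z' : {set T}) : regular_triple H mu X Y Z ->
  mu < dens R H X Y Z ->
  X' \subset X -> Y' \subset Y -> Z' \subset Z ->
  mu * (#|Y|)%:R <= (#|Y'|)%:R -> mu * (#|Z|)%:R <= (#|Z'|)%:R ->
  (forall x y z, x \in X' -> y \in Y' -> z \in Z' -> [set x; y; z] \notin H) ->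
  (#|X'|)%:R < mu * (#|X|)%:R.
Proof.
move=> r d a b c e f h; rewrite ltNge; apply/negP => g.
have := zero_lem r a b c g e f h; rewrite leNgt d //.
Qed.

Lemma smallY (mu : R) X Y Z (X' Y' Z' : {set T}) : regular_triple H mu X Y Z ->
  mu < dens R H X Y Z ->
  X' \subset X -> Y' \subset Y -> Z' \subset Z ->
  mu * (#|X|)%:R <= (#|X'|)%:R -> mu * (#|Z|)%:R <= (#|Z'|)%:R ->
  (forall x y z, x \in X' -> y \in Y' -> z \in Z' -> [set x; y; z] \notin H) ->
  (#|Y'|)%:R < mu * (#|Y|)%:R.
Proof.
move=> r d a b c e f h; rewrite ltNge; apply/negP => g.
have := zero_lem r a b c e g f h; rewrite leNgt d //.
Qed.

Lemma smallZ (mu : R) X Y Z (X' Y' Z' : {set T}) : regular_triple H mu X Y Z ->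
  mu < dens R H X Y Z ->
  X' \subset X -> Y' \subset Y -> Z' \subset Z ->
  mu * (#|X|)%:R <= (#|X'|)%:R -> mu * (#|Y|)%:R <= (#|Y'|)%:R ->
  (forall x y z, x \in X' -> y \in Y' -> z \in Z' -> [set x; y; z] \notin H) ->
  (#|Z'|)%:R < mu * (#|Z|)%:R.
Proof.
move=> r d a b c e f h; rewrite ltNge; apply/negP => g.
have := zero_lem r a b c e f g h; rewrite leNgt d //.
Qed.


Lemma densP_YZX X Y Z : dens R H X Y Z = dens R H Y Z X.
Proof. by rewrite dens_sw12 dens_sw23. Qed.
Lemma densP_ZXY X Y Z : dens R H X Y Z = dens R H Z X Y.
Proof. by rewrite dens_sw23 dens_sw12. Qed.
Lemma densP_ZYX X Y Z : dens R H X Y Z = dens R H Z Y X.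
Proof. by rewrite dens_sw12 dens_sw23 dens_sw12. Qed.

End Gen.

Section Spec.
Variables (U V : finType) (E : {set (U * V)%type}).

Definition perms3 (T : eqType) (a b c : T) : seq (T * T * T) :=
  [:: (a,b,c); (a,c,b); (b,a,c); (b,c,a); (c,a,b); (c,b,a)].

Lemma hat_core (w1 w2 w3 : hatV U V) : [set w1; w2; w3] \in hatG_edges E ->
  exists2 e, e \in E & (w1, w2, w3) \in perms3 (inl e.1 : hatV U V) (inr (inl e.2)) (inr (inr e.2)).
Proof.
case/imsetP => [[u v] he heq]; exists (u, v) => //=.
have m : forall w, (w \in [set w1; w2; w3]) = (w \in [set (inl u : hatV U V); inr (inl v); inr (inr v)])
  by rewrite heq.
have h1 := m w1; have h2 := m w2; have h3 := m w3.
have ha := m (inl u); have hb := m (inr (inl v)); have hc := m (inr (inr v)).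
rewrite !inE !eqxx ?orbT /= in h1 h2 h3 ha hb hc.
move: ha hb hc; symmetry in h1; symmetry in h2; symmetry in h3.
case/orP: h1 => [/orP [] | ] /eqP ->; case/orP: h2 => [/orP [] | ] /eqP ->;
  case/orP: h3 => [/orP [] | ] /eqP -> ; rewrite /perms3 !inE ?eqxx ?orbT //=.
Qed.

Definition typ (w : hatV U V) : nat :=
  match w with inl _ => 0 | inr (inl _) => 1 | inr (inr _) => 2 end.

Lemma perms3P (T : eqType) (a b c x y z : T) : (x, y, z) \in perms3 a b c ->
  (x = a /\ y = b /\ z = c) \/ (x = a /\ y = c /\ z = b) \/ (x = b /\ y = a /\ z = c) \/
  (x = b /\ y = c /\ z = a) \/ (x = c /\ y = a /\ z = b) \/ (x = c /\ y = b /\ z = a).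
Proof.
rewrite /perms3 !inE.
move=> /orP [/eqP [-> -> ->]|/orP [/eqP [-> -> ->]|/orP [/eqP [-> -> ->]|/orP [/eqP [-> -> ->]|/orP [/eqP [-> -> ->]|/eqP [-> -> ->]]]]]];
  intuition auto.
Qed.

Lemma edge_typ w1 w2 w3 : [set w1; w2; w3] \in hatG_edges E ->
  [&& typ w1 != typ w2, typ w1 != typ w3 & typ w2 != typ w3].
Proof.
case/hat_core => [[u v] he /perms3P].
by move=> [[-> [-> ->]]|[[-> [-> ->]]|[[-> [-> ->]]|[[-> [-> ->]]|[[-> [-> ->]]|[-> [-> ->]]]]]]].
Qed.

Lemma edge_bc w1 w2 w3 v : [set w1; w2; w3] \in hatG_edges E ->
  w2 = inr (inl v) -> typ w3 = 2%N -> w3 = inr (inr v).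
Proof.
case/hat_core => [[u v'] he /perms3P] h h2 h3.
intuition (subst; simpl in *; congruence).
Qed.

Lemma edge_abE w1 w2 w3 u v : [set w1; w2; w3] \in hatG_edges E ->
  w1 = inl u -> w2 = inr (inl v) -> (u, v) \in E.
Proof.
case/hat_core => [[u' v'] he /perms3P] h h1 h2.
intuition (subst; simpl in *; first [congruence |
  (injection h1; injection h2; intros; subst; assumption)]).
Qed.

Lemma edge_abc u v : (u, v) \in E ->
  [set (inl u : hatV U V); inr (inl v); inr (inr v)] \in hatG_edges E.
Proof. by move=> h; apply/imsetP; exists (u, v). Qed.

End Spec.

Section Blow.
Variables (W : finType) (F : {set {set W}}) (n : nat).

Lemma blow_mem (x y z : (W * 'I_n)%type) :
  ([set x; y; z] \in blowup_edges F n) = ([set x.1; y.1; z.1] \in F).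
Proof.
rewrite inE; apply/idP/idP.
  case/existsP => w /existsP [i /andP [hF /eqP hS]].
  have im : forall a b c : (W * 'I_n)%type, fst @: [set a; b; c] = [set a.1; b.1; c.1].
    by move=> a b c; rewrite !imsetU !imset_set1.
  by have := im x y z; rewrite hS im /= => <-.
case: x => x1 x2; case: y => y1 y2; case: z => z1 z2 /= h.
apply/existsP; exists (x1, y1, z1); apply/existsP; exists (x2, y2, z2).
by rewrite /= h eqxx.
Qed.
End Blow.

Lemma card_bigcup_le (I T : finType) (A : I -> {set T}) :
  (#|\bigcup_(i : I) A i| <= \sum_(i : I) #|A i|)%N.
Proof.
apply: (big_ind2 (fun (B : {set T}) s => #|B| <= s)%N) => //.
  by rewrite cards0.
move=> B1 s1 B2 s2 h1 h2; rewrite cardsU; apply: leq_trans (leq_subr _ _) _.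
exact: leq_add.
Qed.

Lemma cardU_le (T : finType) (A B : {set T}) : (#|A :|: B| <= #|A| + #|B|)%N.
Proof. by rewrite cardsU leq_subr. Qed.

Section Main.
Variables (R : realType) (U V : finType) (E : {set (U * V)%type}) (n : nat).
Local Notation Vt := (hatV U V * 'I_n)%type.
Local Notation HH := (blowup_edges (hatG_edges E) n).

Definition Tset s := [set x : Vt | typ x.1 == s].
Definition Bset v := [set x : Vt | x.1 == inr (inl v)].
Definition Cset v := [set x : Vt | x.1 == inr (inr v)].
Definition Aset v := [set x : Vt | if x.1 is inl u then (u, v) \in E else false].

Lemma card3 (X : {set Vt}) :
  (#|X| <= #|X :&: Tset 0| + #|X :&: Tset 1| + #|X :&: Tset 2|)%N.
Proof.
apply: leq_trans (_ : #|(X :&: Tset 0) :|: (X :&: Tset 1) :|: (X :&: Tset 2)| <= _)%N.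
  apply: subset_leq_card; apply/subsetP => x hx; rewrite !inE hx /=.
  by case: x hx => [[u|[v|v]] i] _.
apply: leq_trans (cardU_le _ _) _; rewrite leq_add2r; exact: cardU_le.
Qed.

Lemma card3R (X : {set Vt}) :
  (#|X|)%:R <= (#|X :&: Tset 0|)%:R + (#|X :&: Tset 1|)%:R + (#|X :&: Tset 2|)%:R :> R.
Proof. by rewrite -!natrD ler_nat card3. Qed.

Lemma ne_typ12 s x y z : x \in Tset s -> y \in Tset s -> [set x; y; z] \notin HH.
Proof.
move=> hx hy; rewrite blow_mem; apply/negP => /edge_typ.
move: hx hy; rewrite !inE => /eqP -> /eqP ->; by rewrite eqxx.
Qed.

Lemma ne_typ13 s x y z : x \in Tset s -> z \in Tset s -> [set x; y; z] \notin HH.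
Proof.
move=> hx hy; rewrite blow_mem; apply/negP => /edge_typ.
move: hx hy; rewrite !inE => /eqP -> /eqP ->; by rewrite eqxx andbF.
Qed.

Lemma ne_typ23 s x y z : y \in Tset s -> z \in Tset s -> [set x; y; z] \notin HH.
Proof.
move=> hx hy; rewrite blow_mem; apply/negP => /edge_typ.
move: hx hy; rewrite !inE => /eqP -> /eqP ->; by rewrite eqxx !andbF.
Qed.

Lemma inI2 (T : finType) (A B : {set T}) x : x \in A :&: B -> x \in B.
Proof. by rewrite inE => /andP []. Qed.

Lemma Mmain (mu : R) (X Y Z : {set Vt}) :
  0 < mu -> mu * 8 <= 1 -> mu * (#|V|)%:R * 2 < 1 ->
  regular_triple HH mu X Y Z -> mu < dens R HH X Y Z ->
  mu * (#|X|)%:R <= (#|X :&: Tset 0|)%:R -> mu * (#|Y|)%:R <= (#|Y :&: Tset 1|)%:R ->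
  mu * (#|Z|)%:R <= (#|Z :&: Tset 2|)%:R ->
  1 - mu <= dens R HH X Y Z.
Proof.
move=> mu0 mu8 muV r d bX bY bZ.
have [nX nY nZ] := dens_pos_nonempty (lt_trans mu0 d).
have full : forall (A : {set Vt}), mu * (#|A|)%:R <= (#|A|)%:R :> R.
  by move=> A; have := ler0n R #|A|; nra.
have sX1 := smallX r d (subsetIl X (Tset 1)) (subsetIl Y (Tset 1)) (subxx Z) bY (full Z)
  (fun x y z hx hy _ => ne_typ12 z (inI2 hx) (inI2 hy)).
have sX2 := smallX r d (subsetIl X (Tset 2)) (subxx Y) (subsetIl Z (Tset 2)) (full Y) bZ
  (fun x y z hx _ hz => ne_typ13 y (inI2 hx) (inI2 hz)).
have sY0 := smallY r d (subsetIl X (Tset 0)) (subsetIl Y (Tset 0)) (subxx Z) bX (full Z)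
  (fun x y z hx hy _ => ne_typ12 z (inI2 hx) (inI2 hy)).
have sY2 := smallY r d (subxx X) (subsetIl Y (Tset 2)) (subsetIl Z (Tset 2)) (full X) bZ
  (fun x y z _ hy hz => ne_typ23 x (inI2 hy) (inI2 hz)).
have sZ0 := smallZ r d (subsetIl X (Tset 0)) (subxx Y) (subsetIl Z (Tset 0)) bX (full Y)
  (fun x y z hx _ hz => ne_typ13 y (inI2 hx) (inI2 hz)).
have sZ1 := smallZ r d (subxx X) (subsetIl Y (Tset 1)) (subsetIl Z (Tset 1)) (full X) bY
  (fun x y z _ hy hz => ne_typ23 x (inI2 hy) (inI2 hz)).
have cX := card3R X; have cY := card3R Y; have cZ := card3R Z.
have xp : 0 < (#|X|)%:R :> R by rewrite ltr0n.
have yp : 0 < (#|Y|)%:R :> R by rewrite ltr0n.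
have zp : 0 < (#|Z|)%:R :> R by rewrite ltr0n.
have [v bv] : exists v, mu * (#|Y|)%:R <= (#|Y :&: Bset v|)%:R.
  case: (boolP [exists v, mu * (#|Y|)%:R <= (#|Y :&: Bset v|)%:R]) => [/existsP [v hv]|/existsPn hn].
    by exists v.
  exfalso.
  have c1 : (#|Y :&: Tset 1| <= \sum_v #|Y :&: Bset v|)%N.
    apply: leq_trans (card_bigcup_le (fun v => Y :&: Bset v)).
    apply: subset_leq_card; apply/subsetP => x; rewrite !inE => /andP [hx].
    case: x hx => [[u|[v|v]] i] hx //= _.
    by apply/bigcupP; exists v => //; rewrite !inE hx eqxx.
  have c2 : ((\sum_v #|Y :&: Bset v|)%N)%:R <= mu * (#|Y|)%:R * (#|V|)%:R :> R.
    have -> : mu * (#|Y|)%:R * (#|V|)%:R = \sum_(w : V) mu * (#|Y|)%:R :> R.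
      by rewrite sumr_const mulr_natr.
    rewrite natr_sum; apply: ler_sum => w _.
    by have := hn w; rewrite -ltNge => /ltW.
  have c3 : (#|Y :&: Tset 1|)%:R <= mu * (#|Y|)%:R * (#|V|)%:R :> R.
    by apply: le_trans c2; rewrite ler_nat.
  nra.
set Z2 := Z :&: Tset 2.
have e1 := cardsID (Cset v) Z2.
have sZD : Z2 :\: Cset v \subset Z := subset_trans (subsetDl _ _) (subsetIl _ _).
have sZI : Z2 :&: Cset v \subset Z := subset_trans (subsetIl _ _) (subsetIl _ _).
have ne1 : forall x y z, x \in X -> y \in Y :&: Bset v -> z \in Z2 :\: Cset v ->
    [set x; y; z] \notin HH.
  move=> x y z _ hy hz; rewrite blow_mem; apply/negP => he.
  move: hy hz; rewrite !inE => /andP [_ /eqP hy] /andP [hzc /andP [_ /eqP hz2]].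
  by have e := edge_bc he hy hz2; rewrite e eqxx in hzc.
have sZ' := smallZ r d (subxx X) (subsetIl Y (Bset v)) sZD (full X) bv ne1.
have e1R : (#|Z2 :&: Cset v|)%:R + (#|Z2 :\: Cset v|)%:R = (#|Z2|)%:R :> R.
  by rewrite -natrD e1.
have bZ' : mu * (#|Z|)%:R <= (#|Z2 :&: Cset v|)%:R :> R by nra.
set X0 := X :&: Tset 0.
have e2 := cardsID (Aset v) X0.
have sXD : X0 :\: Aset v \subset X := subset_trans (subsetDl _ _) (subsetIl _ _).
have sXI : X0 :&: Aset v \subset X := subset_trans (subsetIl _ _) (subsetIl _ _).
have ne2 : forall x y z, x \in X0 :\: Aset v -> y \in Y :&: Bset v -> z \in Z2 :&: Cset v ->
    [set x; y; z] \notin HH.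
  move=> x y z hx hy _; rewrite blow_mem; apply/negP => he.
  move: hx hy; rewrite !inE => /andP [hxa /andP [_ hx0]] /andP [_ /eqP hy].
  case: x hxa hx0 he => [[u|[w|w]] i] //= hxa _ he.
  by have := edge_abE he (erefl _) hy; rewrite (negbTE hxa).
have sX' := smallX r d sXD (subsetIl Y (Bset v)) sZI bv bZ' ne2.
have e2R : (#|X0 :&: Aset v|)%:R + (#|X0 :\: Aset v|)%:R = (#|X0|)%:R :> R.
  by rewrite -natrD e2.
have bX' : mu * (#|X|)%:R <= (#|X0 :&: Aset v|)%:R :> R by nra.
have pos : forall (A B : {set Vt}), (0 < #|A|)%N -> mu * (#|A|)%:R <= (#|B|)%:R :> R ->
    (0 < #|B|)%N.
  move=> A B hA hB; rewrite -(ltr0n R); apply: lt_le_trans hB.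
  by rewrite mulr_gt0 // ltr0n.
apply: (one_lem r sXI (subsetIl Y (Bset v)) sZI bX' bv bZ' (pos _ _ nX bX') (pos _ _ nY bv)
  (pos _ _ nZ bZ')).
move=> x y z hx hy hz; rewrite blow_mem.
move: hx hy hz; rewrite !inE => /andP [_ hA] /andP [_ /eqP ->] /andP [_ /eqP ->]. case: x hA => [[u|?] i] //= hA; exact: edge_abc.
Qed.

Definition big (mu : R) s (A : {set Vt}) := mu * (#|A|)%:R <= (#|A :&: Tset s|)%:R.

Lemma bigtype (mu : R) (X : {set Vt}) : 0 < mu -> mu * 8 <= 1 -> (0 < #|X|)%N ->
  exists s, (s < 3)%N /\ big mu s X.
Proof.
move=> mu0 mu8 nX; rewrite /big.
case: (boolP (mu * (#|X|)%:R <= (#|X :&: Tset 0|)%:R)) => h0; first by exists 0%N.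
case: (boolP (mu * (#|X|)%:R <= (#|X :&: Tset 1|)%:R)) => h1; first by exists 1%N.
case: (boolP (mu * (#|X|)%:R <= (#|X :&: Tset 2|)%:R)) => h2; first by exists 2%N.
exfalso; rewrite -ltNge in h0; rewrite -ltNge in h1; rewrite -ltNge in h2.
have := card3R X; have : 0 < (#|X|)%:R :> R by rewrite ltr0n.
nra.
Qed.

Lemma same12 (mu : R) (X Y Z : {set Vt}) s : 0 < mu -> mu * 8 <= 1 ->
  regular_triple HH mu X Y Z -> mu < dens R HH X Y Z ->
  big mu s X -> big mu s Y -> False.
Proof.
move=> mu0 mu8 r d bX bY.
have full : mu * (#|Z|)%:R <= (#|Z|)%:R :> R.
  have := ler0n R #|Z|; nra.
have := zero_lem r (subsetIl X (Tset s)) (subsetIl Y (Tset s)) (subxx Z) bX bY full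
  (fun x y z hx hy _ => ne_typ12 z (inI2 hx) (inI2 hy)).
by rewrite leNgt d.
Qed.

Lemma homog3 (mu : R) (X Y Z : {set Vt}) : 0 < mu -> mu * (#|V|)%:R * 2 < 1 ->
  regular_triple HH mu X Y Z -> homogeneous_triple HH (4 * mu) X Y Z.
Proof.
move=> mu0 muV r; rewrite /homogeneous_triple.
have d0 := dens_ge0 R HH X Y Z; have d1 := dens_le1 R HH X Y Z.
case: (lerP (mu * 8) 1) => mu8; last first.
  case: (ltrP (dens R HH X Y Z) (4 * mu)) => h.
    by apply/orP; left; apply/andP; split.
  apply/orP; right; rewrite d1 andbT; lra.
case: (lerP (dens R HH X Y Z) mu) => hd.
  apply/orP; left; rewrite d0 /=; lra.
suff : 1 - mu <= dens R HH X Y Z.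
  move=> h; apply/orP; right; rewrite d1 andbT; lra.
have [nX nY nZ] := dens_pos_nonempty (lt_trans mu0 hd).
have S12 : forall s, big mu s X -> big mu s Y -> False.
  by move=> s; apply: same12 mu0 mu8 r hd.
have S13 : forall s, big mu s X -> big mu s Z -> False.
  by move=> s; apply: (same12 mu0 mu8 (reg_sw23 r)); rewrite -dens_sw23.
have S23 : forall s, big mu s Y -> big mu s Z -> False.
  by move=> s; apply: (same12 mu0 mu8 (reg_sw23 (reg_sw12 r))); rewrite -densP_YZX.
have [sX [hsX bX]] := bigtype mu0 mu8 nX.
have [sY [hsY bY]] := bigtype mu0 mu8 nY.
have [sZ [hsZ bZ]] := bigtype mu0 mu8 nZ.
case: sX hsX bX => [|[|[|?]]] // _ bX; case: sY hsY bY => [|[|[|?]]] // _ bY;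
  case: sZ hsZ bZ => [|[|[|?]]] // _ bZ;
  try (by case: (S12 _ bX bY)); try (by case: (S13 _ bX bZ)); try (by case: (S23 _ bY bZ)).
- exact: Mmain mu0 mu8 muV r hd bX bY bZ.
- rewrite dens_sw23; apply: (Mmain mu0 mu8 muV (reg_sw23 r)) bX bZ bY.
  by rewrite -dens_sw23.
- rewrite dens_sw12; apply: (Mmain mu0 mu8 muV (reg_sw12 r)) bY bX bZ.
  by rewrite -dens_sw12.
- rewrite densP_ZXY; apply: (Mmain mu0 mu8 muV (reg_sw12 (reg_sw23 r))) bZ bX bY.
  by rewrite -densP_ZXY.
- rewrite densP_YZX; apply: (Mmain mu0 mu8 muV (reg_sw23 (reg_sw12 r))) bY bZ bX.
  by rewrite -densP_YZX.
- rewrite densP_ZYX; apply: (Mmain mu0 mu8 muV (reg_sw12 (reg_sw23 (reg_sw12 r)))) bZ bY bX.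
  by rewrite -densP_ZYX.
Qed.

End Main.

Unset Implicit Arguments.
Set Strict Implicit.

Theorem lemma6p6 (R : realType) (t K1 K2 : nat) (mu : R) :
  (1 <= t)%N -> (1 <= K1)%N -> (K1 <= K2)%N ->
  0 < mu -> mu < 1 / (2 * K1%:R) ->
  exists n0 : nat, forall n : nat, (n0 <= n)%N ->
    forall (U V : finType) (E : {set (U * V)%type}),
      #|V| = K1 -> #|U| = K2 ->
      forall P : {set {set (hatV U V * 'I_n)%type}},
        partition P [set: (hatV U V * 'I_n)%type] ->
        (#|P| <= t)%N ->
        regular_partition (blowup_edges (hatG_edges E) n) mu P ->
        homogeneous_partition (blowup_edges (hatG_edges E) n) (4 * mu) P.
Proof.
move=> _ hK1 _ mu0 hmu; exists 0%N => n _ U V E hV _ P _ _ hreg.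
have muV : mu * (#|V|)%:R * 2 < 1.
  have k0 : 0 < 2 * (K1%:R) :> R by rewrite mulr_gt0 // ltr0n.
  move: hmu; rewrite ltr_pdivlMr // hV; lra.
move: hreg; rewrite /homogeneous_partition /regular_partition.
set N := ((_ ^ 3)%N)%:R => hreg.
have N0 : 0 <= N by rewrite /N ler0n.
apply: le_trans (_ : _ <= (1 - mu) * N) _; first nra.
apply: le_trans hreg _.
rewrite ler_nat; apply: subset_leq_card; apply/subsetP => x; rewrite !inE.
case/existsP => X /andP [hX /existsP [Y /andP [hY /existsP [Z /andP [hZ /and4P [a b c rg]]]]]].
apply/existsP; exists X; rewrite hX; apply/existsP; exists Y; rewrite hY.
apply/existsP; exists Z; rewrite hZ a b c /=; exact: homog3 mu0 muV rg.
Qed.
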